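(* Let $G$ be a finite simple graph that is $(P_3\cup P_2,K_4)$-free. Let $D_1=\{x\in V(G): \omega(G-N(x))\le 2\}$. If the induced subgraph $G[D_1]$ contains an induced subgraph isomorphic to $P_2\cup P_1$, then $\chi(G)\le 7$.
   Context: $P_n$ is the path on $n$ vertices, $K_4$ the complete graph on $4$ vertices, $\cup$ disjoint union. ''Free''/''contains'' refer to induced subgraphs. $N(x)$ is the (open) neighborhood of $x$, and $G-N(x)$ is the subgraph induced by $V(G)\setminus N(x)$. $\omega$ denotes clique number and $\chi$ chromatic number. *)

(* Defs.v *)
From mathcomp Require Import all_boot.
Set Implicit Arguments. Unset Strict Implicit. Unset Printing Implicit Defensive.

Definition simple_graph (T : finType) (e : rel T) : Prop :=
  irreflexive e /\ symmetric e.

Definition nbhd (T : finType) (e : rel T) (x : T) : {set T} := [set y | e x y].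

Definition contains_induced_in (T : finType) (e : rel T) (S : {set T})
    (n : nat) (h : rel 'I_n) : Prop :=
  exists f : 'I_n -> T,
    [/\ injective f, (forall i, f i \in S) & (forall i j, e (f i) (f j) = h i j)].

Definition free (T : finType) (e : rel T) (n : nat) (h : rel 'I_n) : Prop :=
  ~ contains_induced_in e [set: T] h.

Definition cliqueb (T : finType) (e : rel T) (K : {set T}) : bool :=
  [forall x in K, forall y in K, (x != y) ==> e x y].

Definition omega_in (T : finType) (e : rel T) (S : {set T}) : nat :=
  \max_(K : {set T} | (K \subset S) && cliqueb e K) #|K|.

Definition colorableb (T : finType) (e : rel T) (k : nat) : bool :=
  [exists f : {ffun T -> 'I_k}, [forall x, forall y, e x y ==> (f x != f y)]].

(* least k <= #|T| such that G is k-colourable (G is always #|T|-colourable) *)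
Definition chi (T : finType) (e : rel T) : nat :=
  find (colorableb e) (iota 0 #|T|.+1).

Definition P3uP2 : rel 'I_5 := fun i j =>
  let a := nat_of_ord i in let b := nat_of_ord j in
  [|| (a == 0) && (b == 1), (a == 1) && (b == 0), (a == 1) && (b == 2),
      (a == 2) && (b == 1), (a == 3) && (b == 4) | (a == 4) && (b == 3)].

Definition K4 : rel 'I_4 := fun i j => i != j.

Definition P2uP1 : rel 'I_3 := fun i j =>
  let a := nat_of_ord i in let b := nat_of_ord j in
  ((a == 0) && (b == 1)) || ((a == 1) && (b == 0)).

Definition D1 (T : finType) (e : rel T) : {set T} :=
  [set x | omega_in e (~: nbhd e x) <= 2].

(* Main.v *)
Require Import Defs.
From mathcomp Require Import all_boot.

Section Proof.
Variables (T : finType) (e : rel T).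
Hypothesis irr : irreflexive e.
Hypothesis sym : symmetric e.

Lemma embed n (s : seq T) (h : rel 'I_n) x0 :
  uniq s -> size s = n ->
  (forall i j : 'I_n, e (nth x0 s i) (nth x0 s j) = h i j) ->
  contains_induced_in e [set: T] h.
Proof.
move=> us ss H; exists (fun i => nth x0 s i); split => //.
move=> i j /eqP; rewrite nth_uniq ?ss // => /eqP; exact: val_inj.
Qed.

Lemma tri w p q r : w \in D1 e -> e p q -> e q r -> e p r ->
  ~~ e w p -> ~~ e w q -> ~~ e w r -> False.
Proof.
rewrite inE => hw pq qr pr wp wq wr.
have npq : p != q by apply/eqP => E; rewrite E irr in pq.
have nqr : q != r by apply/eqP => E; rewrite E irr in qr.
have npr : p != r by apply/eqP => E; rewrite E irr in pr.
have : 3 <= omega_in e (~: nbhd e w).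
  have -> : 3 = #|[set p; q; r]|.
    by rewrite -setUA cardsU1 cards2 nqr !inE negb_or npq npr.
  apply: leq_bigmax_cond; apply/andP; split.
    apply/subsetP => x; rewrite !inE => /orP[/orP[]|] /eqP ->; by rewrite ?wp ?wq ?wr.
  apply/forallP => x; apply/implyP; rewrite !inE => hx.
  apply/forallP => y; apply/implyP; rewrite !inE => hy.
  apply/implyP => nxy.
  move: hx hy nxy => /orP[/orP[]|] /eqP -> /orP[/orP[]|] /eqP ->;
    rewrite ?eqxx //= => _; by rewrite ?pq ?qr ?pr // sym ?pq ?qr ?pr.
by move=> h; move: (leq_trans h hw).
Qed.

End Proof.


Theorem theorem1p1 (T : finType) (e : rel T) :
  simple_graph e ->
  free e P3uP2 -> free e K4 ->
  contains_induced_in e (D1 e) P2uP1 ->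
  chi e <= 7.
Proof.
move=> [irr0 sym0] fP fK [f [finj fD fe]].
have irr : forall x, e x x = false := irr0.
have sym : forall x y, e x y = e y x := sym0.
pose a := f (@Ordinal 3 0 isT); pose b := f (@Ordinal 3 1 isT);
pose c := f (@Ordinal 3 2 isT).
have ab : e a b by rewrite fe.
have ac : e a c = false by rewrite fe.
have bc : e b c = false by rewrite fe.
have Da : a \in D1 e by apply: fD.
have Db : b \in D1 e by apply: fD.
have Dc : c \in D1 e by apply: fD.
have neq p q : e p q -> (p == q) = false.
  by move=> h; apply/eqP => E; rewrite E irr in h.
have LI u v : e u a -> e u b -> e v a -> e v b -> e u v -> False.
  move=> ua ub va vb uv; apply: fK.
  apply: (@embed _ _ 4 [:: a; b; u; v] _ a) => //.
    rewrite /= !inE !negb_or.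
    rewrite !neq // -?(sym u) -?(sym v) //.
  move=> [[|[|[|[|i]]]] Hi] [[|[|[|[|j]]]] Hj] //=.
  all: rewrite /K4 /=; try done; rewrite -?val_eqE /=; try done; try (rewrite sym; done).
have tri' := @tri T e irr0 sym0.
have LA0 u v : e u a -> e v a -> ~~ e u c -> ~~ e v c -> e u v -> False.
  move=> ua va uc vc uv; apply: (tri' c a u v Dc) => //; rewrite ?(sym a) // ?(sym c) ?ac //.
have LA1 u v : e u c -> e v c -> ~~ e u b -> ~~ e v b -> e u v -> False.
  move=> ua va uc vc uv; apply: (tri' b c u v Db) => //; rewrite ?bc ?(sym c) // ?(sym b) //.
have LB0 u v : e u b -> e v b -> ~~ e u c -> ~~ e v c -> e u v -> False.
  move=> ua va uc vc uv; apply: (tri' c b u v Dc) => //; rewrite ?(sym b) // ?(sym c) ?bc //.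
have LB1 u v : e u c -> e v c -> ~~ e u a -> ~~ e v a -> e u v -> False.
  move=> ua va uc vc uv; apply: (tri' a c u v Da) => //; rewrite ?ac ?(sym c) // ?(sym a) //.
have nA p : ~~ e p b -> (p == a) = false.
  by move=> h; apply/eqP => E; rewrite E ab in h.
have nB p : ~~ e p a -> (p == b) = false.
  by move=> h; apply/eqP => E; rewrite E sym ab in h.
have LM x y z : ~~ e x a -> ~~ e x b -> ~~ e y a -> ~~ e y b -> ~~ e z a -> ~~ e z b ->
    e x y -> e x z -> y = z.
  move=> xa xb ya yb za zb xy xz.
  case: (y =P z) => // /eqP nyz; exfalso.
  case: (boolP (e y z)) => yz.
    by apply: (tri' a y x z Da) => //; rewrite ?(sym y) // (sym a).
  apply: fP.
  apply: (@embed _ _ 5 [:: y; x; z; a; b] _ a).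
    rewrite /= !inE !negb_or.
    have yx : e y x by rewrite sym.
    by rewrite (neq y x yx) (neq x z xz) nyz (nA y) // (nB y) // (nA x) // (nB x) //
      (nA z) // (nB z) // (neq a b ab).
    by [].
  move: xa xb ya yb za zb yz => /negbTE xa /negbTE xb /negbTE ya /negbTE yb
    /negbTE za /negbTE zb /negbTE yz.
  move=> [[|[|[|[|[|i]]]]] Hi] [[|[|[|[|[|j]]]]] Hj] //=.
  all: rewrite /P3uP2 /=; try done; try (rewrite sym; done).
pose ex x := [exists z, [&& ~~ e z a, ~~ e z b, e x z & pickle z < pickle x]].
have Rlem x y : ~~ e x a -> ~~ e x b -> ~~ e y a -> ~~ e y b -> e x y -> ex x != ex y.
  move=> xa xb ya yb xy.
  have yx : e y x by rewrite sym.
  case: (boolP (ex x)) => [/existsP [z /and4P[za zb xz zx]] | nx];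
  case: (boolP (ex y)) => [/existsP [w /and4P[wa wb yw wy]] | ny] //.
    have Ez := LM x y z xa xb ya yb za zb xy xz.
    have Ew := LM y x w ya yb xa xb wa wb yx yw.
    rewrite -Ez -Ew in zx wy.
    by move: (ltn_trans zx wy); rewrite ltnn.
  move/existsPn: nx => /(_ y); rewrite xy ya yb !andTb => h1.
  move/existsPn: ny => /(_ x); rewrite yx xa xb !andTb => h2.
  have E0 : pickle x = pickle y by apply: anti_leq; rewrite leqNgt h1 leqNgt h2.
  by move: xy; rewrite (pcan_inj pickleK E0) irr.
pose n x := if e x a then (if e x b then 0 else if e x c then 2 else 1)
  else if e x b then (if e x c then 4 else 3) else (if ex x then 6 else 5).
have nlt x : n x < 7 by rewrite /n; repeat case: ifP.
have main x y : e x y -> n x != n y.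
{ move=> xy; rewrite /n.
  case: (boolP (e x a)) => xa; case: (boolP (e x b)) => xb; case: (boolP (e x c)) => xc;
  case: (boolP (e y a)) => ya; case: (boolP (e y b)) => yb; case: (boolP (e y c)) => yc;
  try done.
  all: try (by case: (ex x); case: (ex y)).
  all: try (by have := Rlem x y xa xb ya yb xy; case: (ex x); case: (ex y)).
  all: exfalso; first [ exact: (LI x y xa xb ya yb xy) | exact: (LA0 x y xa ya xc yc xy)
    | exact: (LA1 x y xc yc xb yb xy) | exact: (LB0 x y xb yb xc yc xy)
    | exact: (LB1 x y xc yc xa ya xy) ]. }
have col7 : colorableb e 7.
  apply/existsP; exists [ffun x => inord (n x) : 'I_7].
  apply/forallP => x; apply/forallP => y; apply/implyP => xy; rewrite !ffunE.
  apply/eqP => /(congr1 (@nat_of_ord 7)); rewrite !inordK ?nlt // => /eqP.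
  by apply/negP; apply: main.
rewrite /chi; case: leqP => // H.
have := before_find 0 H.
rewrite nth_iota ?add0n ?col7 //.
apply: leq_trans H _; have := find_size (colorableb e) (iota 0 #|T|.+1); by rewrite size_iota.
Qed.
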